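(* For any term $t$, scalar $\alpha$, type $T$ and context $\Gamma$ of the Scalar type system: if $\Gamma\vdash\alpha.t:T$ then there exist a unit type $U$ and a scalar $\gamma\in\mathcal S$ such that $T\equiv\alpha.\gamma.U$.
   Context: Fix a commutative ring $(\mathcal{S},+,\times)$. Terms: $t,r ::= b \mid (t)\,r \mid \mathbf{0} \mid \alpha.t \mid t+r$, basis terms $b ::= x \mid \lambda x\,t$, modulo associativity and commutativity of $+$. Types: $T ::= U \mid \forall X.T \mid \alpha.T \mid \overline{0}$; unit types: $U ::= X \mid U\to T \mid \forall X.U$. Type variables are only substituted by unit types; $(\alpha.T)[U/X]=\alpha.T[U/X]$. Type equivalence $\equiv$ is the least congruence with $\alpha.\overline0\equiv\overline0$, $0.T\equiv\overline0$, $1.T\equiv T$, $\alpha.(\beta.T)\equiv(\alpha\times\beta).T$, $\forall X.\alpha.T\equiv\alpha.\forall X.T$. A context is a set of distinct term variables with unit types. Typing rules: (ax) $\Gamma,x:U\vdash x:U$; ($\equiv$) from $\Gamma\vdash t:T$ and $T\equiv S$ infer $\Gamma\vdash t:S$; ($\to_E$) from $\Gamma\vdash t:\alpha.(U\to T)$ and $\Gamma\vdash r:\beta.U$ infer $\Gamma\vdash (t)\,r:(\alpha\times\beta).T$; ($\to_I$) from $\Gamma,x:U\vdash t:T$ infer $\Gamma\vdash\lambda x\,t:U\to T$; ($\forall_E$) from $\Gamma\vdash t:\forall X.T$ infer $\Gamma\vdash t:T[U/X]$, $U$ unit; ($\forall_I$) from $\Gamma\vdash t:T$ with $X$ not free in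 $\Gamma$ infer $\Gamma\vdash t:\forall X.T$; ($ax_{\overline0}$) $\Gamma\vdash\mathbf 0:\overline0$; ($+_I$) from $\Gamma\vdash t:\alpha.T$ and $\Gamma\vdash r:\beta.T$ infer $\Gamma\vdash t+r:(\alpha+\beta).T$; ($s_I$) from $\Gamma\vdash t:T$ infer $\Gamma\vdash\alpha.t:\alpha.T$. *)

(* Defs.v *)
(* Scalar type system with scalars in a commutative ring.
   Binders (term variables and type variables) use de Bruijn indices. *)
From mathcomp Require Import all_boot all_algebra.
Set Implicit Arguments. Unset Strict Implicit. Unset Printing Implicit Defensive.
Import GRing.Theory.
Local Open Scope ring_scope.

Section Scalar.
Variable R : comPzRingType.

Inductive term : Type :=
| tVar : nat -> term
| tLam : term -> term
| tApp : term -> term -> term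
| tZero : term
| tScal : R -> term -> term
| tPlus : term -> term -> term.

(* Terms are taken modulo associativity and commutativity of + *)
Inductive term_ac : term -> term -> Prop :=
| ac_refl t : term_ac t t
| ac_sym t r : term_ac t r -> term_ac r t
| ac_trans t r s : term_ac t r -> term_ac r s -> term_ac t s
| ac_lam t t' : term_ac t t' -> term_ac (tLam t) (tLam t')
| ac_app t t' r r' : term_ac t t' -> term_ac r r' -> term_ac (tApp t r) (tApp t' r')
| ac_scal a t t' : term_ac t t' -> term_ac (tScal a t) (tScal a t')
| ac_plus t t' r r' : term_ac t t' -> term_ac r r' -> term_ac (tPlus t r) (tPlus t' r')
| ac_comm t r : term_ac (tPlus t r) (tPlus r t)
| ac_assoc t r s : term_ac (tPlus t (tPlus r s)) (tPlus (tPlus t r) s).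

Inductive ty : Type :=
| TVar : nat -> ty
| TArr : ty -> ty -> ty
| TAll : ty -> ty
| TScal : R -> ty -> ty
| TZero : ty.

(* isUnit T : T is a unit type  U ::= X | U -> T | forall X. U
   wfTy T   : T is a type       T ::= U | forall X.T | alpha.T | 0bar *)
Fixpoint isUnit (T : ty) : bool :=
  match T with
  | TVar _ => true
  | TArr A B => isUnit A && wfTy B
  | TAll A => isUnit A
  | TScal _ _ => false
  | TZero => false
  end
with wfTy (T : ty) : bool :=
  match T with
  | TVar _ => true
  | TArr A B => isUnit A && wfTy B
  | TAll A => wfTy A
  | TScal _ A => wfTy A
  | TZero => true
  end.

Fixpoint shiftTy (c : nat) (T : ty) : ty :=
  match T with
  | TVar n => if (n < c)%N then TVar n else TVar n.+1
  | TArr A B => TArr (shiftTy c A) (shiftTy c B)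
  | TAll A => TAll (shiftTy c.+1 A)
  | TScal a A => TScal a (shiftTy c A)
  | TZero => TZero
  end.

Definition liftTy (k : nat) (U : ty) : ty := iter k (shiftTy 0) U.

Fixpoint substTy (k : nat) (U : ty) (T : ty) : ty :=
  match T with
  | TVar n => if n == k then liftTy k U
              else if (n < k)%N then TVar n else TVar n.-1
  | TArr A B => TArr (substTy k U A) (substTy k U B)
  | TAll A => TAll (substTy k.+1 U A)
  | TScal a A => TScal a (substTy k U A)
  | TZero => TZero
  end.

Inductive tyeq : ty -> ty -> Prop :=
| eq_refl T : wfTy T -> tyeq T T
| eq_sym T S : tyeq T S -> tyeq S T
| eq_trans T S V : tyeq T S -> tyeq S V -> tyeq T V
| eq_arr U U' T T' : isUnit U -> isUnit U' -> tyeq U U' -> tyeq T T' ->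
    tyeq (TArr U T) (TArr U' T')
| eq_all T T' : tyeq T T' -> tyeq (TAll T) (TAll T')
| eq_scal a T T' : tyeq T T' -> tyeq (TScal a T) (TScal a T')
| eq_scal_zero a : tyeq (TScal a TZero) TZero
| eq_zero_scal T : wfTy T -> tyeq (TScal 0 T) TZero
| eq_one_scal T : wfTy T -> tyeq (TScal 1 T) T
| eq_scal_scal a b T : wfTy T -> tyeq (TScal a (TScal b T)) (TScal (a * b) T)
| eq_all_scal a T : wfTy T -> tyeq (TAll (TScal a T)) (TScal a (TAll T)).

Definition context := seq ty.
Definition isContext (G : context) : bool := all isUnit G.

Inductive typing : context -> term -> ty -> Prop :=
| ty_ac G t t' T : term_ac t t' -> typing G t T -> typing G t' T
| ty_ax G n U : nth TZero G n = U -> (n < size G)%N -> isUnit U ->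
    typing G (tVar n) U
| ty_equiv G t T S : typing G t T -> tyeq T S -> typing G t S
| ty_arrE G t r a b U T : typing G t (TScal a (TArr U T)) ->
    typing G r (TScal b U) -> typing G (tApp t r) (TScal (a * b) T)
| ty_arrI G t U T : isUnit U -> typing (U :: G) t T ->
    typing G (tLam t) (TArr U T)
| ty_allE G t T U : isUnit U -> typing G t (TAll T) ->
    typing G t (substTy 0 U T)
| ty_allI G t T : typing (map (shiftTy 0) G) t T -> typing G t (TAll T)
| ty_zero G : typing G tZero TZero
| ty_plusI G t r a b T : typing G t (TScal a T) -> typing G r (TScal b T) ->
    typing G (tPlus t r) (TScal (a + b) T)
| ty_scalI G t a T : typing G t T -> typing G (tScal a t) (TScal a T).

End Scalar.

(* Main.v *)
Require Import Defs.
From mathcomp Require Import all_boot all_algebra.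
Import GRing.Theory.
Set Implicit Arguments. Unset Strict Implicit.

Section Aux.
Variable R : comPzRingType.
Local Open Scope ring_scope.

Lemma unit_wf (T : ty R) : isUnit T -> wfTy T.
Proof. elim: T => //= A IH; exact: IH. Qed.

Lemma tyeq_wf (T S : ty R) : tyeq T S -> wfTy T /\ wfTy S.
Proof.
elim=> //=; try by intuition.
move=> U U' T0 T' hU hU' _ _ _ [h1 h2]; by rewrite hU hU' h1 h2.
Qed.

Lemma shift_ok (T : ty R) : forall c,
  (isUnit T -> isUnit (shiftTy c T)) /\ (wfTy T -> wfTy (shiftTy c T)).
Proof.
elim: T => [n|A IHA B IHB|A IHA|a A IHA|] c /=.
- by case: ifP.
- have [a1 _] := IHA c; have [_ b2] := IHB c.
  split=> /andP [h1 h2]; by rewrite a1 // b2.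
- have [a1 a2] := IHA c.+1; split; [exact: a1 | exact: a2].
- have [_ a2] := IHA c; split; [by [] | exact: a2].
- by [].
Qed.

Lemma lift_unit k (U : ty R) : isUnit U -> isUnit (liftTy k U).
Proof.
rewrite /liftTy; elim: k => //= k IH h; exact: (shift_ok _ 0).1 (IH h).
Qed.

Lemma subst_ok (U : ty R) : isUnit U -> forall T k,
  (isUnit T -> isUnit (substTy k U T)) /\ (wfTy T -> wfTy (substTy k U T)).
Proof.
move=> hU; elim => [n|A IHA B IHB|A IHA|a A IHA|] k /=.
- case: ifP => _; first by have h := lift_unit k hU; split => _ //; apply: unit_wf.
  by case: ifP.
- have [a1 _] := IHA k; have [_ b2] := IHB k.
  split=> /andP [h1 h2]; by rewrite a1 // b2.
- have [a1 a2] := IHA k.+1; split; [exact: a1 | exact: a2].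
- have [_ a2] := IHA k; split; [by [] | exact: a2].
- by [].
Qed.

Lemma typing_wf G (t : term R) T : typing G t T -> wfTy T.
Proof.
elim=> //=.
- move=> ? ? U _ _ hU; exact: unit_wf.
- by move=> ? ? ? ? _ _ /tyeq_wf [].
- by move=> ? ? ? ? ? ? ? _ /= /andP [_ ->].
- by move=> ? ? ? ? -> _ ->.
- move=> ? ? T0 U hU _ h; exact: ((subst_ok hU T0 0).2 h).
Qed.

Fixpoint sc (T : ty R) : R :=
  match T with
  | TScal a A => a * sc A
  | TAll A => sc A
  | TZero => 0
  | _ => 1
  end.

Fixpoint core (T : ty R) : ty R :=
  match T with
  | TScal a A => core A
  | TAll A => TAll (core A)
  | TZero => TVar R 0
  | _ => T
  end.

Lemma sc_unit (T : ty R) : isUnit T -> sc T = 1.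
Proof. elim: T => //= A IH; exact: IH. Qed.

Lemma sc_subst (U : ty R) : isUnit U -> forall T k, sc (substTy k U T) = sc T.
Proof.
move=> hU; elim => [n|A IHA B IHB|A IHA|a A IHA|] k //=.
- case: ifP => _; first by rewrite sc_unit // lift_unit.
  by case: ifP.
- by rewrite IHA.
Qed.

Lemma sc_tyeq (T S : ty R) : tyeq T S -> sc T = sc S.
Proof.
elim=> //= *; try congruence.
- by rewrite mulr0.
- by rewrite mul0r.
- by rewrite mul1r.
- by rewrite mulrA.
Qed.

Lemma decomp (T : ty R) : wfTy T -> isUnit (core T) /\ tyeq T (TScal (sc T) (core T)).
Proof.
elim: T => [n|A IHA B IHB|A IHA|a A IHA|] /=.
- move=> _; split => //; apply: Defs.eq_sym; apply: eq_one_scal => //.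
- move=> h; split => //; apply: Defs.eq_sym; apply: eq_one_scal => //.
- move=> /IHA [h1 h2]; split => //.
  apply: (Defs.eq_trans (Defs.eq_all h2)); apply: eq_all_scal; exact: unit_wf.
- move=> /IHA [h1 h2]; split => //.
  apply: (Defs.eq_trans (Defs.eq_scal a h2)); apply: eq_scal_scal; exact: unit_wf.
- move=> _; split => //; apply: Defs.eq_sym; exact: eq_zero_scal.
Qed.

Definition headScal (a : R) (u : term R) := exists t, u = tScal a t.

Lemma ac_head a (u v : term R) : term_ac u v -> (headScal a u <-> headScal a v).
Proof.
elim.
- by [].
- by move=> ? ? _ [h1 h2]; split.
- by move=> ? ? ? _ [h1 h2] _ [h3 h4]; split => h; auto.
- by move=> *; split => -[x].
- by move=> *; split => -[x].
- move=> a0 t t' _ [h1 h2]; split => -[x [-> _]]; by eexists.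
- by move=> *; split => -[x].
- by move=> *; split => -[x].
- by move=> *; split => -[x].
Qed.

Lemma main_aux G (u : term R) T : typing G u T -> forall a, headScal a u ->
  wfTy T /\ exists g, sc T = a * g.
Proof.
elim.
- move=> G0 t t' T0 hac _ IH a h; apply: IH; exact: (ac_head a hac).2 h.
- by move=> ? ? ? _ _ _ a [x hx]; discriminate hx.
- move=> ? ? T0 S _ IH heq a h; have [w [g hg]] := IH a h.
  split; first by have [] := tyeq_wf heq.
  exists g; by rewrite -(sc_tyeq heq).
- by move=> ? ? ? ? ? ? ? _ _ _ _ a [x hx]; discriminate hx.
- by move=> ? ? ? ? _ _ _ a [x hx]; discriminate hx.
- move=> ? ? T0 U hU _ IH a h; have [w [g hg]] := IH a h.
  split; first exact: ((subst_ok hU T0 0).2 w).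
  exists g; by rewrite sc_subst.
- by move=> ? ? ? _ IH a h; have [w hg] := IH a h; split.
- by move=> ? a [x hx]; discriminate hx.
- by move=> ? ? ? ? ? ? _ _ _ _ a [x hx]; discriminate hx.
- move=> ? t a0 T0 ht _ a [x [-> _]]; split; first exact: typing_wf ht.
  by exists (sc T0).
Qed.

End Aux.

Theorem mainTheorem13 (R : comPzRingType) (G : context R) (a : R)
    (t : term R) (T : ty R) :
  isContext G -> typing G (tScal a t) T ->
  exists (U : ty R) (g : R), isUnit U /\ tyeq T (TScal a (TScal g U)).
Proof.
move=> _ ht; have [w [g hg]] := main_aux ht (ex_intro _ t erefl).
have [hu he] := decomp w; exists (core T), g; split => //.
apply: (Defs.eq_trans he); rewrite hg; apply: Defs.eq_sym; apply: eq_scal_scal.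
exact: unit_wf.
Qed.
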